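(* The map $\bullet^{\perp}:\mathrm{Gr}(n,2n)\rightarrow\mathrm{Gr}(n,2n)$, sending an $n$-plane $U$ to $U^{\perp}:=\{u\in\mathbb{C}^{2n}\mid\Omega(u,u')=0\text{ for all }u'\in U\}$, expressed in Plücker coordinates coincides with the Lagrangian involution $\tau:p_{\alpha}\mapsto\sigma_{\alpha}p_{\alpha^t}$: \[ \Bigl[ p_{\alpha}~\Bigl\lvert~\alpha\in\tbinom{\langle n\rangle}{n}\Bigr] \mapsto \Bigl[\sigma_{\alpha}p_{\alpha^t}~\Bigr\rvert~\alpha\in\tbinom{\langle n\rangle}{n}\Bigr]\,. \] In particular, the relation $p_{\alpha}-\sigma_{\alpha}p_{\alpha^t}=0$ holds on $\mathrm{LG}(n)$.
   Context: Let $[n]:=\{1,\dotsc,n\}$, $\bar{\imath}:=-i$, and $\langle n\rangle:=\{\bar{n},\dotsc,\bar1,1,\dotsc,n\}$. Fix an ordered basis $\{e_{\bar{n}},\dotsc,e_{\bar1},e_1,\dotsc,e_n\}$ of $\mathbb{C}^{2n}$ and the non-degenerate alternating form $\Omega:=\sum_{i=1}^n e_{\bar{\imath}}\wedge e_i$. The Grassmannian $\mathrm{Gr}(n,2n)\subseteq\mathbb{P}(\bigwedge^n\mathbb{C}^{2n})$ has Plücker coordinates $p_\alpha$ indexed by $n$-element subsets $\alpha\in\binom{\langle n\rangle}{n}$, and the Lagrangian Grassmannian $\mathrm{LG}(n)$ is the set of maximal isotropic subspaces of $\mathbb{C}^{2n}$ relative to $\Omega$. For $\alpha\in\binom{\langle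 n\rangle}{n}$, $\alpha^t$ denotes the complement of $\{\bar\alpha_1,\dotsc,\bar\alpha_n\}$ in $\langle n\rangle$ (equivalently, the transpose of the partition in the $n\times n$ square associated to $\alpha$); $\alpha_+$ (respectively $\alpha_-$) denotes the subsequence of positive (negative) elements of $\alpha$, and $\alpha_+^c$, $\alpha_-^c$ their complements among the positive (negative) elements of $\langle n\rangle$. Set $\sigma_{\alpha}:={\rm sgn}(\alpha_+^c,\alpha_+)\cdot{\rm sgn}(\alpha_-,\alpha_-^c)=\pm1$, where ${\rm sgn}(a_1,\dotsc,a_s)$ is the sign of the permutation sorting the sequence $(a_1,\dotsc,a_s)$. The Lagrangian involution is the map $\tau:p_{\alpha}\mapsto\sigma_{\alpha}p_{\alpha^t}$.
   Formalization: In $\sigma_{\alpha}$, α₋ and α₋ᶜ are the sets {i ∈ [n] : ī ∈ α} and its complement in [n], listed in increasing order of i, instead of the negative labels in the order n̄,…,1̄. The statement above fails without it. *)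

(* Defs.v *)
From HB Require Import structures.
From mathcomp Require Import all_boot all_order all_algebra.
From mathcomp Require Import complex.
From mathcomp Require Import reals.
Set Implicit Arguments. Unset Strict Implicit. Unset Printing Implicit Defensive.
Import Order.TTheory GRing.Theory Num.Theory.
Local Open Scope ring_scope.

(* Coordinates of C^{2n} are indexed by positions k : 'I_(n + n), the
   position k corresponding to the basis vector e_(lab k) in the ordered
   basis e_{nbar}, ..., e_{1bar}, e_1, ..., e_n:
     k < n   |-> label -(n - k)      (i.e. \bar{n-k})
     k >= n  |-> label  k - n + 1.                                         *)
Definition lab (n : nat) (k : 'I_(n + n)) : int :=
  if (k < n)%N then - ((n - k)%:Z) else ((k - n).+1)%:Z.

(* The position of the label \bar{x} (= -x) is the reversed position. *)
Definition barpos (n : nat) (k : 'I_(n + n)) : 'I_(n + n) := rev_ord k.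

(* Omega = sum_i e_{ibar} /\ e_i, as a bilinear form on row vectors:
   Omega(u,v) = sum_i (u_{ibar} v_i - u_i v_{ibar}). *)
Definition Omega (F : fieldType) (n : nat) (u v : 'rV[F]_(n + n)) : F :=
  \sum_(k : 'I_(n + n) | (n <= k)%N)
     (u 0 (barpos k) * v 0 k - u 0 k * v 0 (barpos k)).

(* Plucker coordinate p_alpha of the n-plane spanned by the rows of
   A : 'M_(n, 2n): the maximal minor on the columns in alpha, taken in
   increasing order (enum of a set of ordinals is increasing). *)
Definition pluecker (F : fieldType) (n : nat) (A : 'M[F]_(n, n + n))
    (alpha : {set 'I_(n + n)}) : F :=
  \det (\matrix_(i < n, j < n)
          A i (nth (widen_ord (leq_addr n n) j) (enum alpha) j)).

Definition ltrans (n : nat) (alpha : {set 'I_(n + n)}) : {set 'I_(n + n)} :=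
  ~: (@barpos n @: alpha).

Definition sgnseq (s : seq int) : int :=
  (-1) ^+ (\sum_(i < size s) \sum_(j < size s)
             ((i < j)%N && (nth 0%R s j < nth 0%R s i)%R))%N.

Definition alpha_pos (n : nat) (alpha : {set 'I_(n + n)}) : seq int :=
  map (@lab n) [seq k : 'I_(n + n) <- enum alpha | (n <= k)%N].
Definition alpha_posc (n : nat) (alpha : {set 'I_(n + n)}) : seq int :=
  alpha_pos (~: alpha).
(* alpha_- and alpha_-^c: negative elements \bar{i} of alpha, recorded by
   i in [n] in increasing order of i. *)
Definition alpha_neg (n : nat) (alpha : {set 'I_(n + n)}) : seq int :=
  rev (map (fun k => - @lab n k) [seq k : 'I_(n + n) <- enum alpha | (k < n)%N]).
Definition alpha_negc (n : nat) (alpha : {set 'I_(n + n)}) : seq int :=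
  alpha_neg (~: alpha).

Definition lsign (n : nat) (alpha : {set 'I_(n + n)}) : int :=
  sgnseq (alpha_posc alpha ++ alpha_pos alpha) *
  sgnseq (alpha_neg alpha ++ alpha_negc alpha).

(* Main.v *)
Require Import Defs.
From HB Require Import structures.
From mathcomp Require Import all_boot all_order all_algebra all_fingroup.
From mathcomp Require Import complex.
From mathcomp Require Import reals.
From mathcomp Require Import zify ring.
Set Implicit Arguments. Unset Strict Implicit. Unset Printing Implicit Defensive.
Import Order.TTheory GRing.Theory Num.Theory.
Local Open Scope ring_scope.

Section Inv.
Variable T : Type.
Variable lt : rel T.
Fixpoint invr (s : seq T) : nat :=
  if s is x :: t then (count (fun y => lt y x) t + invr t)%N else 0%N.
Definition crossr (s t : seq T) : nat :=
  (\sum_(x <- s) count (fun y => lt y x) t)%N.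
Lemma invr_cat s t : invr (s ++ t) = (invr s + invr t + crossr s t)%N.
Proof.
elim: s => [|x s IH] /=; first by rewrite /crossr big_nil addn0.
rewrite IH /crossr big_cons count_cat; lia.
Qed.
End Inv.

Lemma sum_nth_count (T : Type) (x0 : T) (P : pred T) (s : seq T) :
  (\sum_(j < size s) P (nth x0 s j))%N = count P s.
Proof.
elim: s => [|x s IH] /=; first by rewrite big_ord0.
by rewrite big_ord_recl /= IH.
Qed.

Lemma sgnseqE (s : seq int) :
  sgnseq s = (-1) ^+ invr (fun a b : int => (a < b)%R) s.
Proof.
rewrite /sgnseq; congr (_ ^+ _).
elim: s => [|x s IH] /=; first by rewrite big_ord0.
rewrite big_ord_recl /= big_ord_recl /= add0n.
rewrite (eq_bigr (fun j : 'I_(size s) => (nth 0 s j < x)%R : nat)); last first.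
  by move=> j _.
rewrite (sum_nth_count 0 (fun y => (y < x)%R)) -IH; congr (_ + _)%N.
apply: eq_bigr => i _; rewrite big_ord_recl /=.
by rewrite add0n.
Qed.

Section Sort.
Variable N : nat.
Definition leo (x y : 'I_N) := (x <= y)%N.
Definition lto (x y : 'I_N) := (x < y)%N.
Lemma leo_total : total leo. Proof. by move=> x y; rewrite /leo leq_total. Qed.
Lemma leo_trans : transitive leo. Proof. by move=> x y z; rewrite /leo; apply: leq_trans. Qed.
Lemma leo_anti : antisymmetric leo.
Proof. by move=> x y /andP[h1 h2]; apply: val_inj; apply/eqP; rewrite eqn_leq; apply/andP. Qed.
Lemma lto_trans : transitive lto. Proof. by move=> x y z; rewrite /lto; apply: ltn_trans. Qed.

Lemma sorted_lto_leo s : sorted lto s -> sorted leo s.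
Proof. by apply: sub_sorted => x y; rewrite /lto /leo; apply: ltnW. Qed.

Lemma sorted_lto_uniq s : sorted leo s -> uniq s -> sorted lto s.
Proof.
move=> h1 h2.
have e1 : sorted lto s = sorted ltn (map val s) by rewrite sorted_map.
have e2 : sorted leo s = sorted leq (map val s) by rewrite sorted_map.
by rewrite e1 ltn_sorted_uniq_leq (map_inj_uniq val_inj) h2 -e2 h1.
Qed.

Lemma sort_eqP s t : sorted leo t -> perm_eq s t -> sort leo s = t.
Proof.
move=> st pst; apply: (sorted_eq leo_trans leo_anti) => //.
  exact: (sort_sorted leo_total).
by rewrite perm_sort.
Qed.

Variable R : comRingType.
Definition swp (G : seq 'I_N -> R) (k : nat) :=
  forall a y z b, (size a + size b).+2 = k ->
    G (a ++ y :: z :: b) = - G (a ++ z :: y :: b).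

Lemma swp_cons G k x : swp G k.+1 -> swp (fun t => G (x :: t)) k.
Proof. by move=> H a y z b e; apply: (H (x :: a)); rewrite /= e. Qed.

Lemma ins_lemma w : forall x G k, swp G k -> (size w).+1 = k -> sorted lto w ->
  x \notin w ->
  G (x :: w) = (-1) ^+ count (fun y => lto y x) w * G (sort leo (x :: w)).
Proof.
elim: w => [|y w IH] x G k HG Hk Hs Hx.
  by rewrite /= expr0 mul1r (@sorted_sort _ leo leo_trans).
rewrite in_cons negb_or in Hx; case/andP: Hx => Hxy Hxw.
have Hp : all (lto y) w by apply: (order_path_min lto_trans).
have Hs' : sorted lto w by apply: (path_sorted Hs).
case: (ltnP y x) => hyx.
- rewrite (HG [::] x y w) /=; last by rewrite -Hk.
  have HG' : swp (fun t => G (y :: t)) k.-1.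
    by apply: swp_cons; rewrite -Hk /= Hk.
  rewrite (IH x _ _ HG') //; last by rewrite -Hk.
  have -> : sort leo [:: x, y & w] = y :: sort leo (x :: w).
    apply: sort_eqP.
      rewrite /= (path_sortedE leo_trans) (sort_sorted leo_total) andbT.
      rewrite (perm_all _ (permEl (perm_sort leo _))) /= /leo (ltnW hyx) /=.
      by apply: sub_all Hp => z; rewrite /lto /leo => /ltnW.
    apply: (@perm_trans _ [:: y, x & w]).
      by apply/permPl; exact: (perm_catCA [:: x] [:: y] w).
    by rewrite perm_cons perm_sym perm_sort.
  by rewrite /lto hyx add1n exprS mulN1r mulNr.
- have hxy : (x < y)%N by rewrite ltn_neqAle hyx andbT; apply: contra Hxy => /eqP h; apply/eqP/val_inj.
  rewrite (@sorted_sort _ leo leo_trans); last first.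
    by apply: sorted_lto_leo; rewrite /= /lto hxy.
  rewrite (@eq_in_count _ _ pred0) ?count_pred0 ?expr0 ?mul1r // => z.
  rewrite in_cons => /orP[/eqP -> | hz] /=; first by rewrite /lto ltnNge ltnW.
  move/allP: Hp => /(_ z hz); rewrite /lto => hyz.
  by rewrite ltnNge ltnW // (ltn_trans hxy hyz).
Qed.

Lemma sort_lemma u : forall G k, swp G k -> size u = k -> uniq u ->
  G u = (-1) ^+ invr lto u * G (sort leo u).
Proof.
elim: u => [|x t IH] G k HG Hk Hu.
  by rewrite /= expr0 mul1r.
case/andP: Hu => Hxt Hut.
have HG' : swp (fun t => G (x :: t)) (size t) by apply: swp_cons; move: HG; rewrite -Hk.
rewrite (IH _ _ HG') //=.
rewrite (ins_lemma (k := k) HG) ?size_sort //.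
  rewrite count_sort exprD mulrA [(-1) ^+ invr lto t * _]mulrC.
  congr (_ * G _).
  by apply/perm_sortP; [exact: leo_total|exact: leo_trans|exact: leo_anti|rewrite perm_cons perm_sort].
- by apply: sorted_lto_uniq; [exact: (sort_sorted leo_total)|rewrite sort_uniq].
- by rewrite mem_sort.
Qed.
End Sort.

Lemma sign_sq (R : pzRingType) k : (-1) ^+ k * (-1) ^+ k = 1 :> R.
Proof. by rewrite -signr_odd; case: (odd k); rewrite ?expr0 ?expr1 ?mulr1 ?mulrNN ?mulr1. Qed.

Lemma nth_swap T (x0 : T) a y z b j : j != size a -> j != (size a).+1 ->
  nth x0 (a ++ y :: z :: b) j = nth x0 (a ++ z :: y :: b) j.
Proof.
move=> /eqP h1 /eqP h2; rewrite !nth_cat; case: ltnP => // hj.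
have [k ->] : exists k, (j - size a = k.+2)%N by exists (j - size a - 2)%N; lia.
by [].
Qed.

Section Colsel.
Variable R : comRingType.
Definition colsel m N (d : 'I_m -> 'I_N) (M : 'M[R]_(m, N)) (u : seq 'I_N) : 'M[R]_m :=
  \matrix_(i, j) M i (nth (d j) u j).

Lemma colsel_swp m N d (M : 'M[R]_(m, N)) : swp (fun u => \det (colsel d M u)) m.
Proof.
move=> a y z b hs.
have hp : (size a < m)%N by lia.
have hp' : ((size a).+1 < m)%N by lia.
pose p := Ordinal hp; pose p' := Ordinal hp'.
have -> : colsel d M (a ++ z :: y :: b) = xcol p p' (colsel d M (a ++ y :: z :: b)).
  apply/matrixP => i j; rewrite /xcol !mxE.
  case: tpermP => [->|->|h1 h2].
  - by rewrite /= !nth_cat ?ltnn ?subnn ltnNge leqnSn /= subSnn.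
  - by rewrite /= !nth_cat ?ltnn ?subnn ltnNge leqnSn /= subSnn.
  - rewrite nth_swap //.
      by apply/eqP => e; apply: h1; apply: val_inj.
    by apply/eqP => e; apply: h2; apply: val_inj.
rewrite xcolE det_mulmx /tperm_mx det_perm odd_tperm.
have -> : (p != p') by rewrite -(inj_eq val_inj) /= neq_ltn ltnSn.
by rewrite expr1 mulrN1 opprK.
Qed.

Lemma det_colsel_sort m N d (M : 'M[R]_(m, N)) u : size u = m -> uniq u ->
  \det (colsel d M u) = (-1) ^+ invr (@lto N) u * \det (colsel d M (sort (@leo N) u)).
Proof.
move=> hs hu.
exact: (sort_lemma (G := fun u => \det (colsel d M u)) (colsel_swp d M) hs hu).
Qed.

Lemma sorted_enum_ord N : sorted (@leo N) (enum 'I_N).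
Proof.
have e : sorted (@leo N) (enum 'I_N) = sorted leq (map val (enum 'I_N)) by rewrite sorted_map.
by rewrite e val_enum_ord iota_sorted.
Qed.

Lemma sorted_enum_set N (A : {set 'I_N}) : sorted (@lto N) (enum A).
Proof.
apply: sorted_lto_uniq; last exact: enum_uniq.
rewrite /enum_mem -enumT; apply: sorted_filter; first exact: leo_trans.
exact: sorted_enum_ord.
Qed.

Lemma colsel_enum N (M : 'M[R]_N) : colsel id M (enum 'I_N) = M.
Proof. by apply/matrixP => i j; rewrite !mxE nth_ord_enum. Qed.

Definition dflt n (i : 'I_n) : 'I_(n + n) := widen_ord (leq_addr n n) i.

Definition Et n (t : seq 'I_(n + n)) : 'M[R]_(n, n + n) :=
  \matrix_(i, k) ((k == nth (dflt i) t i)%:R).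

Lemma block_det n (A : 'M[R]_(n, n + n)) (s t : seq 'I_(n + n)) :
  size s = n -> size t = n -> uniq (s ++ t) ->
  \det (col_mx A (Et t)) = (-1) ^+ invr (@lto _) (s ++ t) * \det (colsel (@dflt n) A s).
Proof.
move=> hs ht hu.
set M := col_mx A (Et t).
have hsz : size (s ++ t) = (n + n)%N by rewrite size_cat hs ht.
have hsort : sort (@leo _) (s ++ t) = enum 'I_(n + n).
  apply: sort_eqP; first exact: sorted_enum_ord.
  apply: uniq_perm => //; first exact: enum_uniq.
  have hsub : {subset s ++ t <= enum 'I_(n + n)} by move=> x _; rewrite mem_enum.
  apply: (uniq_min_size hu hsub _).2.
  by rewrite size_enum_ord hsz.
have := det_colsel_sort id M hsz hu; rewrite hsort colsel_enum => e.
have -> : \det M = (-1) ^+ invr (@lto _) (s ++ t) * \det (colsel id M (s ++ t)).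
  by rewrite e mulrA sign_sq mul1r.
congr (_ * _).
have -> : colsel id M (s ++ t) =
   block_mx (colsel (@dflt n) A s) (colsel (@dflt n) A t) 0 1.
  rewrite cat_uniq in hu; case/and3P: hu => hus hst hut.
  apply/matrixP => i j.
  case: (split_ordP i) => i' ->; case: (split_ordP j) => j' ->;
    rewrite [LHS]mxE ?col_mxEu ?col_mxEd ?row_mxEl ?row_mxEr !mxE /=.
  - rewrite nth_cat hs ltn_ord; congr (A _ _); apply: set_nth_default; by rewrite hs.
  - rewrite nth_cat hs ltnNge leq_addr /= addKn; congr (A _ _); apply: set_nth_default; by rewrite ht.
  - rewrite nth_cat hs ltn_ord.
    case: eqP => // e1; case/negP: hst; apply/hasP; exists (nth (dflt i') t i').
      by apply: mem_nth; rewrite ht.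
    by rewrite /= -e1 mem_nth // hs.
  - rewrite nth_cat hs ltnNge leq_addr /= addKn.
    rewrite (set_nth_default (dflt i') (rshift n j')) ?ht //.
    by rewrite nth_uniq ?ht // eq_sym.
by rewrite det_ublock det1 mulr1.
Qed.
End Colsel.

Lemma dot_lemma (F : fieldType) n (A C : 'M[F]_(n, n + n)) :
  \rank A = n -> C *m A^T = 0 ->
  exists c : F, (forall D : 'M_(n, n + n), \det (D *m C^T) = c * \det (col_mx A D))
     /\ (row_free C -> c != 0).
Proof.
move=> hr hCA.
have hAC : A *m C^T = 0 by rewrite -[A]trmxK -trmx_mul hCA trmx0.
set L := col_ebase A; set U := row_ebase A.
have eA : A = L *m row_mx 1%:M 0 *m U.
  have -> : row_mx 1%:M 0 = pid_mx (\rank A) :> 'M[F]_(n, n + n) by rewrite hr pid_mx_row.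
  by rewrite /L /U mulmx_ebase.
set Y : 'M[F]_(n, n + n) := row_mx 0 1%:M *m U.
set K := col_mx A Y.
have eK : K = block_mx L 0 0 1%:M *m U.
  rewrite /K /Y eA mul_col_mx mul_mx_row mulmx1 mulmx0.
  by [].
have hK : K \in unitmx.
  rewrite eK unitmx_mul /U row_ebase_unit andbT unitmxE det_ublock det1 mulr1 -unitmxE.
  exact: col_ebase_unit.
have hdK : \det K != 0 by rewrite -unitfE -unitmxE.
exists (\det (Y *m C^T) / \det K); split.
  move=> D.
  set Z := D *m invmx K.
  have eD : D = lsubmx Z *m A + rsubmx Z *m Y.
    by rewrite -mul_row_col hsubmxK /Z mulmxKV.
  have e1 : D *m C^T = rsubmx Z *m (Y *m C^T).
    by rewrite {1}eD mulmxDl -!mulmxA hAC mulmx0 add0r.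
  have e2 : col_mx A D = block_mx 1%:M 0 (lsubmx Z) (rsubmx Z) *m K.
    by rewrite /K mul_block_col mul1mx mul0mx addr0 -eD.
  rewrite e1 e2 !det_mulmx det_lblock det1 mul1r.
  by field.
move=> hC; rewrite mulf_neq0 // ?invr_eq0 //.
apply/negP => /eqP h0.
have : \det (C *m Y^T) == 0 by rewrite -det_tr trmx_mul trmxK h0.
case/det0P => v hv hvC.
set w := v *m C.
have hw : w != 0.
  apply: contra hv => /eqP hw0; apply/eqP.
  by apply: (row_free_inj hC); rewrite mul0mx.
have hwK : w *m K^T = 0.
  rewrite /K tr_col_mx mul_mx_row /w -!mulmxA hCA mulmx0 hvC.
  by rewrite row_mx0.
case/negP: hw; apply/eqP.
by rewrite -[w](mulmxK (_ : K^T \in unitmx)) ?hwK ?mul0mx // unitmx_tr.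
Qed.

Lemma prod_nth_dflt (R : comRingType) (T : Type) (f : T -> R) (s : seq T) :
  forall m (d : 'I_m -> T), size s = m ->
  \prod_(j < m) f (nth (d j) s j) = \prod_(x <- s) f x.
Proof.
elim: s => [|x s IH] [|m] d //= hs.
  by rewrite big_ord0 big_nil.
rewrite big_ord_recl big_cons /=; congr (_ * _).
by apply: (IH m (fun j => d (lift ord0 j))); case: hs.
Qed.

Section Sympl.
Variable F : fieldType.
Variable n : nat.
Local Notation bar := (@barpos n).

Lemma barE (k : 'I_(n + n)) : val (bar k) = (n + n - k.+1)%N.
Proof. by []. Qed.
Lemma bar_inv : involutive bar. Proof. exact: rev_ordK. Qed.
Lemma bar_inj : injective bar. Proof. exact: rev_ord_inj. Qed.
Lemma bar_lt (x y : 'I_(n + n)) : (bar x < bar y)%N = (y < x)%N.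
Proof. rewrite !barE; have := ltn_ord x; have := ltn_ord y; lia. Qed.
Lemma barL (k : 'I_(n + n)) : (bar k < n)%N = (n <= k)%N.
Proof. rewrite !barE; have := ltn_ord k; lia. Qed.

Definition sgnJ (k : 'I_(n + n)) : F := if (k < n)%N then -1 else 1.
Definition Jm : 'M[F]_(n + n) := \matrix_(k, l) (if k == bar l then sgnJ l else 0).

Lemma mulJE m (B : 'M[F]_(m, n + n)) i l : (B *m Jm) i l = B i (bar l) * sgnJ l.
Proof.
rewrite !mxE (bigD1 (bar l)) //= big1 ?addr0; first by rewrite mxE eqxx.
by move=> k /negPf hk; rewrite mxE hk mulr0.
Qed.

Lemma JJ : Jm *m Jm = - 1%:M.
Proof.
apply/matrixP => k l; rewrite mulJE !mxE bar_inv.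
case: ifP => [/eqP e|e].
  subst k; rewrite /= mulr1n.
  by rewrite /sgnJ barL; case: leqP => h; rewrite ?mulN1r ?mul1r ?opprK.
by rewrite mul0r /= mulr0n oppr0.
Qed.

Lemma Omega_J (A B : 'M[F]_(n, n + n)) i j :
  Omega (row i B) (row j A) = ((B *m Jm) *m A^T) i j.
Proof.
rewrite /Omega [RHS]mxE [RHS](bigID (fun l : 'I_(n + n) => n <= l)%N) /=.
rewrite sumrB; congr (_ + _).
  by apply: eq_bigr => l hl; rewrite mulJE !mxE /sgnJ ltnNge hl /= mulr1.
rewrite -sumrN (reindex_inj bar_inj) /=.
apply: eq_big => [l|l hl]; first by have := ltn_ord l; lia.
rewrite bar_inv mulJE !mxE /sgnJ.
have -> : (l < n)%N by move: hl; have := ltn_ord l; lia.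
by rewrite mulrN1 mulNr.
Qed.

End Sympl.

Section InvLemmas.
Variable T : Type.
Lemma invr_map (T' : Type) (lt : rel T') (f : T -> T') (s : seq T) :
  invr lt (map f s) = invr (fun a b => lt (f a) (f b)) s.
Proof. by elim: s => [|x s IH] //=; rewrite IH count_map. Qed.

Lemma eq_invr (lt1 lt2 : rel T) : lt1 =2 lt2 -> forall s, invr lt1 s = invr lt2 s.
Proof.
move=> h; elim => [|x s IH] //=; rewrite IH; congr (_ + _)%N.
by apply: eq_count => y; rewrite h.
Qed.

Lemma invr_rcons (lt : rel T) s x :
  invr lt (rcons s x) = (invr lt s + count (fun y => lt x y) s)%N.
Proof. by elim: s => [|y s IH] //=; rewrite IH -cats1 count_cat /=; lia. Qed.

Lemma invr_rev (lt : rel T) s : invr lt (rev s) = invr (fun a b => lt b a) s.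
Proof. elim: s => [|x s IH] //. by rewrite rev_cons invr_rcons IH /= addnC count_rev. Qed.
End InvLemmas.

Lemma count_sumE (T : Type) (a : pred T) (s : seq T) : count a s = (\sum_(x <- s) a x)%N.
Proof. by elim: s => [|x s IH]; rewrite ?big_nil ?big_cons //= IH. Qed.

Section Comb.
Variable N : nat.

Lemma invr_sorted0 (s : seq 'I_N) : sorted (@lto N) s -> invr (@lto N) s = 0%N.
Proof.
elim: s => [|x s IH] //= hs.
rewrite IH ?(path_sorted hs) // addn0.
have := order_path_min (@lto_trans N) hs.
move=> /allP h; apply/eqP; rewrite -leqn0 leqNgt -has_count; apply/hasPn => y hy.
by have := h y hy; rewrite /lto => hxy; rewrite ltnNge ltnW.
Qed.

Lemma invr_sorted_flip (s : seq 'I_N) : sorted (@lto N) s ->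
  invr (fun a b : 'I_N => (b < a)%N) s = 'C(size s, 2).
Proof.
elim: s => [|x s IH] //= hs.
rewrite IH ?(path_sorted hs) // binS bin1 addnC; congr (_ + _)%N.
have := order_path_min (@lto_trans N) hs => /allP h.
rewrite -[RHS](count_predT s); apply: eq_in_count => y hy.
by have := h y hy.
Qed.

Definition cr (P Q : pred 'I_N) : nat :=
  (\sum_x \sum_y ((P x && Q y && (y < x)%N) : nat))%N.
Definition sz (P : pred 'I_N) : nat := (\sum_x (P x : nat))%N.

Lemma sum_filter_enum (X : {set 'I_N}) (p : pred 'I_N) (F : 'I_N -> nat) :
  (\sum_(x <- [seq x <- enum X | p x]) F x = \sum_x (if (x \in X) && p x then F x else 0))%N.
Proof. by rewrite big_filter big_enum_cond big_mkcond. Qed.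

Lemma crossr_enum (X Y : {set 'I_N}) (p q : pred 'I_N) :
  crossr (@lto N) [seq x <- enum X | p x] [seq y <- enum Y | q y]
  = cr (fun x => (x \in X) && p x) (fun y => (y \in Y) && q y).
Proof.
rewrite /crossr sum_filter_enum /cr; apply: eq_bigr => x _.
rewrite count_sumE sum_filter_enum.
case: ((x \in X) && p x) => /=; last by rewrite big1.
by apply: eq_bigr => y _; case: ((y \in Y) && q y).
Qed.

Lemma count_enum (X : {set 'I_N}) (p : pred 'I_N) :
  count p (enum X) = sz (fun x => (x \in X) && p x).
Proof.
rewrite -[enum X]filter_predT count_sumE sum_filter_enum /sz.
by apply: eq_bigr => x _; rewrite andbT; case: (x \in X); case: (p x).
Qed.

Lemma cr_swap (P Q : pred 'I_N) : (forall x, P x -> Q x -> False) ->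
  (cr P Q + cr Q P = sz P * sz Q)%N.
Proof.
move=> hd; rewrite /cr /sz [X in (_ + X)%N]exchange_big -big_split big_distrl /=.
apply: eq_bigr => x _; rewrite -big_split big_distrr /=; apply: eq_bigr => y _.
case hx: (P x); case hy: (Q y) => //=; rewrite ?muln0 ?mul0n ?muln1 //.
have hxy : x != y by apply/eqP => e; subst y; exact: (hd x).
rewrite neq_ltn in hxy; case/orP: hxy => h; rewrite h ltnNge ltnW //.
Qed.

End Comb.

Section Parity.
Variable n : nat.
Local Notation bar := (@barpos n).

Lemma lab_lt (x y : 'I_(n + n)) : (lab x < lab y)%R = (x < y)%N.
Proof.
rewrite /lab; have := ltn_ord x; have := ltn_ord y.
case: ifP => hx; case: ifP => hy => h1 h2; apply/idP/idP; lia.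
Qed.

Lemma enum_sorted_filter (X : {set 'I_(n + n)}) (p : pred 'I_(n + n)) :
  sorted (@lto _) [seq x <- enum X | p x].
Proof. apply: sorted_filter; [exact: lto_trans | exact: sorted_enum_set]. Qed.

Lemma i1E (alpha : {set 'I_(n + n)}) :
  invr (fun a b : int => (a < b)%R) (alpha_posc alpha ++ alpha_pos alpha)
  = cr (fun x => (x \in ~: alpha) && (n <= x)%N) (fun y => (y \in alpha) && (n <= y)%N).
Proof.
rewrite /alpha_posc /alpha_pos -map_cat invr_map (eq_invr (lt2 := @lto _)); last first.
  by move=> a b; rewrite lab_lt.
rewrite invr_cat !invr_sorted0 ?enum_sorted_filter // crossr_enum.
by [].
Qed.

Lemma i2E (alpha : {set 'I_(n + n)}) :
  invr (fun a b : int => (a < b)%R) (alpha_neg alpha ++ alpha_negc alpha)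
  = cr (fun x => (x \in ~: alpha) && (x < n)%N) (fun y => (y \in alpha) && (y < n)%N).
Proof.
rewrite /alpha_negc /alpha_neg -rev_cat -map_cat invr_rev invr_map.
rewrite (eq_invr (lt2 := @lto _)); last first.
  by move=> a b /=; rewrite ltrN2 lab_lt.
rewrite invr_cat !invr_sorted0 ?enum_sorted_filter // crossr_enum.
by [].
Qed.


Lemma count_barE (alpha : {set 'I_(n + n)}) :
  count (fun x : 'I_(n + n) => (x < n)%N) (map bar (enum alpha))
  = sz (fun x => (x \in alpha) && (n <= x)%N).
Proof.
rewrite count_map -count_enum; apply: eq_count => x /=.
by rewrite barL.
Qed.

Lemma invLE (alpha : {set 'I_(n + n)}) : #|alpha| = n ->
  invr (@lto _) (enum (ltrans alpha) ++ map bar (enum alpha))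
  = ('C(n, 2) + cr (fun x => x \in alpha) (fun y => y \in ~: alpha))%N.
Proof.
move=> ha.
rewrite invr_cat invr_sorted0 ?sorted_enum_set // add0n.
rewrite invr_map (eq_invr (lt2 := fun a b : 'I_(n + n) => (b < a)%N)); last first.
  by move=> a b; rewrite /lto bar_lt.
rewrite invr_sorted_flip ?sorted_enum_set // -cardE ha; congr (_ + _)%N.
have hp : perm_eq (map bar (enum alpha)) [seq y <- enum (bar @: alpha) | predT y].
  rewrite filter_predT; apply: uniq_perm.
  - by rewrite (map_inj_uniq (@bar_inj n)) enum_uniq.
  - exact: enum_uniq.
  move=> y; rewrite mem_enum; apply/mapP/imsetP => [[z hz ->]|[z hz ->]].
    by exists z; rewrite // -mem_enum.
  by exists z; rewrite // mem_enum.
rewrite /crossr (eq_bigr (fun x : 'I_(n + n) => count (fun y : 'I_(n + n) => (y < x)%N) [seq y <- enum (bar @: alpha) | predT y])); last first.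
  by move=> x _; move/seq.permP: hp => ->.
rewrite -[enum (ltrans alpha)]filter_predT.
rewrite -/(crossr (@lto _) _ _) crossr_enum /cr.
rewrite exchange_big (reindex_inj (@bar_inj n)) /=; apply: eq_bigr => x _.
rewrite (reindex_inj (@bar_inj n)) /=; apply: eq_bigr => y _.
rewrite !andbT /ltrans !inE !(mem_imset _ _ (@bar_inj n)) bar_lt.
by case: (x \in alpha); case: (y \in alpha).
Qed.


Lemma sz_split (P Q : pred 'I_(n + n)) :
  sz P = (sz (fun x => P x && Q x) + sz (fun x => P x && ~~ Q x))%N.
Proof.
rewrite /sz -big_split; apply: eq_bigr => x _.
by case: (P x); case: (Q x).
Qed.

Lemma sz_card (alpha : {set 'I_(n + n)}) : sz (fun x => x \in alpha) = #|alpha|.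
Proof. by rewrite -sum1_card big_mkcond /sz; apply: eq_bigr => x _; case: (x \in alpha). Qed.

Lemma szH : sz (fun x : 'I_(n + n) => (n <= x)%N) = n.
Proof.
rewrite /sz big_split_ord /= big1 ?add0n => [|i _]; last by rewrite leqNgt ltn_ord.
rewrite (eq_bigr (fun _ => 1%N)) => [|i _]; last by rewrite leq_addr.
by rewrite sum1_card card_ord.
Qed.

Lemma szL : sz (fun x : 'I_(n + n) => (x < n)%N) = n.
Proof.
rewrite /sz big_split_ord /= [X in (_ + X)%N]big1 ?addn0 => [|i _]; last first.
  by rewrite ltnNge leq_addr.
rewrite (eq_bigr (fun _ => 1%N)) => [|i _]; last by rewrite ltn_ord.
by rewrite sum1_card card_ord.
Qed.

Lemma cr_decomp (alpha : {set 'I_(n + n)}) :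
  cr (fun x => x \in alpha) (fun y => y \in ~: alpha) =
  (cr (fun x => (x \in alpha) && (n <= x)%N) (fun y => (y \in ~: alpha) && (n <= y)%N)
  + cr (fun x => (x \in alpha) && (x < n)%N) (fun y => (y \in ~: alpha) && (y < n)%N)
  + sz (fun x => (x \in alpha) && (n <= x)%N) * sz (fun y => (y \in ~: alpha) && (y < n)%N))%N.
Proof.
rewrite /cr /sz big_distrl /= -!big_split; apply: eq_bigr => x _.
rewrite big_distrr /= -!big_split; apply: eq_bigr => y _.
rewrite !inE; case: (x \in alpha); case: (y \in alpha) => //=.
  by rewrite !andbF muln0.
case: (leqP n x) => hx; case: (leqP n y) => hy /=.
- by rewrite muln0 !addn0.
- by rewrite (leq_trans hy hx).
- by rewrite ltnNge (leq_trans (ltnW hx) hy).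
- by rewrite add0n addn0.
Qed.


Lemma szHsplit (alpha : {set 'I_(n + n)}) :
  sz (fun x : 'I_(n + n) => (n <= x)%N) =
  (sz (fun x => (x \in alpha) && (n <= x)%N) + sz (fun x => (x \in ~: alpha) && (n <= x)%N))%N.
Proof. by rewrite /sz -big_split; apply: eq_bigr => x _; rewrite inE; case: (x \in alpha); case: (n <= x)%N. Qed.

Lemma szLsplit (alpha : {set 'I_(n + n)}) :
  sz (fun x : 'I_(n + n) => (x < n)%N) =
  (sz (fun x => (x \in alpha) && (x < n)%N) + sz (fun x => (x \in ~: alpha) && (x < n)%N))%N.
Proof. by rewrite /sz -big_split; apply: eq_bigr => x _; rewrite inE; case: (x \in alpha); case: (x < n)%N. Qed.

Lemma szAsplit (alpha : {set 'I_(n + n)}) :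
  sz (fun x : 'I_(n + n) => x \in alpha) =
  (sz (fun x => (x \in alpha) && (n <= x)%N) + sz (fun x => (x \in alpha) && (x < n)%N))%N.
Proof. by rewrite /sz -big_split; apply: eq_bigr => x _; case: (x \in alpha); case: leqP. Qed.

Lemma parity_arith (m C YH XH YL XL b' a a' b : nat) :
  (YH + XH = b' * a -> YL + XL = a' * b -> m = a + b -> m = a + b' -> m = b + a' ->
  odd (C + (a + (C + (XH + XL + a * a')))) = odd (YH + YL))%N.
Proof.
move=> e1 e2 e3 e4 e5.
have ea : a' = a by lia.
have eb : b' = b by lia.
subst a' b'.
have e : (YH + YL + (C + (a + (C + (XH + XL + a * a)))) = (C + a * b).*2 + (a + a * a))%N.
  rewrite mulnC in e1; lia.
have : odd (YH + YL + (C + (a + (C + (XH + XL + a * a))))) = false.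
  by rewrite e oddD odd_double /= oddD oddM; case: (odd a).
rewrite oddD; case: (odd (YH + YL)); case: (odd (C + _)) => //.
Qed.

Lemma sign_parity0 (alpha : {set 'I_(n + n)}) : #|alpha| = n ->
  odd ('C(n, 2) + (count (fun x : 'I_(n + n) => (x < n)%N) (map bar (enum alpha))
        + invr (@lto _) (enum (ltrans alpha) ++ map bar (enum alpha))))
  = odd (invr (fun a b : int => (a < b)%R) (alpha_posc alpha ++ alpha_pos alpha)
         + invr (fun a b : int => (a < b)%R) (alpha_neg alpha ++ alpha_negc alpha)).
Proof.
move=> ha.
rewrite count_barE invLE // i1E i2E cr_decomp.
have hH := @cr_swap _ (fun x => (x \in ~: alpha) && (n <= x)%N) (fun y => (y \in alpha) && (n <= y)%N).
have hL := @cr_swap _ (fun x => (x \in ~: alpha) && (x < n)%N) (fun y => (y \in alpha) && (y < n)%N).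
have {hH}hH := hH (fun x => ltac:(by rewrite inE => /andP[/negP h _] /andP[h' _])).
have {hL}hL := hL (fun x => ltac:(by rewrite inE => /andP[/negP h _] /andP[h' _])).
have h1 := szAsplit alpha; rewrite sz_card ha in h1.
have h2 := szHsplit alpha; rewrite szH in h2.
have h3 := szLsplit alpha; rewrite szL in h3.
exact: (parity_arith _ hH hL h1 h2 h3).
Qed.
End Parity.

Section Part1.
Variable F : fieldType.
Variable n : nat.
Local Notation bar := (@barpos n).

Lemma EtC (C : 'M[F]_(n, n + n)) t : Et F t *m C^T = (colsel (@dflt n) C t)^T.
Proof.
apply/matrixP => i j; rewrite !mxE (bigD1 (nth (dflt i) t i)) //= big1 ?addr0.
  by rewrite !mxE eqxx mul1r.
by move=> k /negPf hk; rewrite !mxE hk mul0r.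
Qed.

Lemma colsel_J (B : 'M[F]_(n, n + n)) (e : seq 'I_(n + n)) : size e = n ->
  colsel (@dflt n) (B *m Jm F n) (map bar e) =
  colsel (@dflt n) B e *m diag_mx (\row_j sgnJ F (nth (dflt j) (map bar e) j)).
Proof.
move=> he; apply/matrixP => i j; rewrite mul_mx_diag [LHS]mxE mulJE !mxE.
by rewrite (nth_map (dflt j)) ?he // bar_inv.
Qed.

Lemma prod_sgnJ (t : seq 'I_(n + n)) :
  \prod_(x <- t) sgnJ F x = (-1) ^+ count (fun x : 'I_(n + n) => (x < n)%N) t.
Proof.
elim: t => [|x t IH]; first by rewrite big_nil expr0.
by rewrite big_cons IH /= exprD /sgnJ; case: (x < n)%N; rewrite ?expr1 ?expr0.
Qed.

Lemma card_ltrans (alpha : {set 'I_(n + n)}) : #|alpha| = n -> #|ltrans alpha| = n.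
Proof.
move=> ha; have := cardsC (bar @: alpha); rewrite card_ord card_imset ?ha.
  by rewrite /ltrans => h; apply/eqP; rewrite -(eqn_add2l n) h.
exact: rev_ord_inj.
Qed.

Lemma sign_parity (alpha : {set 'I_(n + n)}) : #|alpha| = n ->
  odd ('C(n, 2) + (count (fun x : 'I_(n + n) => (x < n)%N) (map bar (enum alpha))
        + invr (@lto _) (enum (ltrans alpha) ++ map bar (enum alpha))))
  = odd (invr (fun a b : int => (a < b)%R) (alpha_posc alpha ++ alpha_pos alpha)
         + invr (fun a b : int => (a < b)%R) (alpha_neg alpha ++ alpha_negc alpha)).
Proof. exact: sign_parity0. Qed.

Lemma lsignF (alpha : {set 'I_(n + n)}) : #|alpha| = n ->
  (lsign alpha)%:~R = (-1) ^+ 'C(n, 2) *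
     ((-1) ^+ count (fun x : 'I_(n + n) => (x < n)%N) (map bar (enum alpha)) *
      (-1) ^+ invr (@lto _) (enum (ltrans alpha) ++ map bar (enum alpha))) :> F.
Proof.
move=> ha; rewrite -!exprD -signr_odd sign_parity // signr_odd exprD.
by rewrite /lsign !sgnseqE rmorphM /= !intr_sign.
Qed.

Lemma part1 (A B : 'M[F]_(n, n + n)) :
  \rank A = n -> \rank B = n ->
  (forall (i j : 'I_n), Omega (row i B) (row j A) = 0) ->
  exists2 c : F, c != 0 &
    forall alpha : {set 'I_(n + n)}, #|alpha| = n ->
      pluecker B alpha = c * (lsign alpha)%:~R * pluecker A (ltrans alpha).
Proof.
move=> hA hB hO.
set C := B *m Jm F n.
have hCA : C *m A^T = 0 by apply/matrixP => i j; rewrite -Omega_J hO mxE.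
have hfC : row_free C.
  have hJ : row_free (Jm F n).
    rewrite row_free_unit.
    have hJJ : Jm F n *m (- Jm F n) = 1%:M by rewrite mulmxN JJ opprK.
    by have [h _] := mulmx1_unit hJJ.
  by rewrite /row_free /C mxrankMfree // hB.
have [c0 [hc0 hc0nz]] := dot_lemma hA hCA.
exists (c0 * (-1) ^+ 'C(n, 2)); first by rewrite mulf_neq0 ?signr_eq0 ?hc0nz.
move=> alpha ha.
set e := enum alpha; set t := map bar e; set s := enum (ltrans alpha).
have he : size e = n by rewrite -cardE.
have ht : size t = n by rewrite size_map.
have hs : size s = n by rewrite -cardE card_ltrans.
have hu : uniq (s ++ t).
  rewrite cat_uniq enum_uniq (map_inj_uniq (@bar_inj n)) enum_uniq /= andbT.
  apply/hasPn => x /mapP [z hz ->]; rewrite mem_enum /ltrans inE negbK.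
  by apply: imset_f; rewrite mem_enum in hz.
have key := hc0 (Et F t).
rewrite EtC det_tr colsel_J // det_mulmx det_diag in key.
rewrite (block_det A hs ht hu) in key.
have eP : \prod_(i < n) (\row_j sgnJ F (nth (dflt j) t j)) 0 i =
   (-1) ^+ count (fun x : 'I_(n + n) => (x < n)%N) t.
  rewrite (eq_bigr (fun j : 'I_n => sgnJ F (nth (dflt j) t j))); last by move=> j _; rewrite mxE.
  by rewrite (@prod_nth_dflt F _ (@sgnJ F n) t n (@dflt n) ht) prod_sgnJ.
rewrite eP in key.
rewrite (lsignF ha) -/e -/t -/s.
rewrite /pluecker.
change (\det (colsel (@dflt n) B e) = c0 * (-1) ^+ 'C(n, 2) *
  ((-1) ^+ 'C(n, 2) * ((-1) ^+ count (fun x : 'I_(n + n) => (x < n)%N) t *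
    (-1) ^+ invr (@lto _) (s ++ t))) * \det (colsel (@dflt n) A s)).
set p := \det (colsel _ B e) in key *.
set sg := (-1) ^+ count _ t in key *.
set eps := (-1) ^+ invr _ (s ++ t) in key *.
have hsg : sg * sg = 1 by apply: sign_sq.
have hk : (-1) ^+ 'C(n, 2) * (-1) ^+ 'C(n, 2) = 1 :> F by apply: sign_sq.
have -> : p = p * sg * sg by rewrite -mulrA hsg mulr1.
rewrite key.
set pA := \det (colsel _ A s).
apply: (@eq_trans _ _ (c0 * (eps * pA) * sg * ((-1) ^+ 'C(n,2) * (-1) ^+ 'C(n,2)))).
  by rewrite hk mulr1.
ring.
Qed.
End Part1.

Lemma exists_S (F : fieldType) n (P Q : 'M[F]_n) :
  (forall z : 'rV[F]_n, z *m row_mx P Q = 0 -> z = 0) -> P *m Q^T = Q *m P^T ->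
  exists S : {set 'I_n}, \det (\matrix_(i, m) (if m \in S then Q i m else P i m)) != 0.
Proof.
move=> hfree hsym.
set f := maxrankfun Q^T.
set r := \rank Q^T.
set Rs := rowsub f Q^T.
have hRfree : row_free Rs := maxrowsub_free Q^T.
have hsub : (Q^T <= Rs)%MS by rewrite /Rs eq_maxrowsub.
have finj : injective f := @maxrankfun_inj _ _ _ Q^T.
set Qs := Rs^T.
have F1 : forall w : 'rV[F]_n, w *m Qs = 0 -> w *m Q = 0.
  move=> w hw; have [X hX] := submxP hsub.
  have -> : Q = Qs *m X^T by rewrite /Qs -trmx_mul -hX trmxK.
  by rewrite mulmxA hw mul0mx.
have F2 : forall y : 'rV[F]_r, exists w : 'rV[F]_n, w *m Qs = y.
  move=> y.
  have hfull : row_full Qs by rewrite /row_full /Qs mxrank_tr; exact: hRfree.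
  have /submxP [w hw] := submx_full y hfull.
  by exists w.
exists (f @: [set: 'I_r]).
set S := f @: [set: 'I_r].
set M := \matrix_(i, m) _.
apply/negP => /det0P [v hv hvM].
have hM m : (v *m M) 0 m = if m \in S then (v *m Q) 0 m else (v *m P) 0 m.
  rewrite !mxE; case: ifP => h; apply: eq_bigr => i _; by rewrite /M mxE h.
have hvQs : v *m Qs = 0.
  apply/rowP => j; rewrite !mxE.
  have := hM (f j); rewrite hvM mxE imset_f ?inE // => /esym h.
  rewrite -[RHS]h mxE; apply: eq_bigr => i _; by rewrite !mxE.
have hvQ := F1 v hvQs.
set y := v *m P.
have hyQ : y *m Q^T = 0 by rewrite /y -mulmxA hsym mulmxA hvQ mul0mx.
have hy : y = 0.
  apply/rowP => m; rewrite [RHS]mxE.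
  case hmS : (m \in S); last first.
    by have := hM m; rewrite hvM hmS !mxE => /esym.
  case/imsetP: hmS => j _ ->.
  have [w hw] := F2 (delta_mx 0 j).
  have : (y *m (w *m Q)^T) 0 0 = 0 by rewrite trmx_mul mulmxA hyQ mul0mx mxE.
  rewrite mxE (bigD1 (f j)) //= big1 ?addr0.
    have -> : (w *m Q)^T (f j) 0 = 1.
      rewrite mxE -[RHS](_ : (delta_mx 0 j : 'rV[F]_r) 0 j = 1); last by rewrite mxE !eqxx.
      by rewrite -hw !mxE; apply: eq_bigr => i _; rewrite !mxE.
    by rewrite mulr1.
  move=> m' hm'.
  case hm'S : (m' \in S).
    case/imsetP: hm'S => j' _ e'; subst m'.
    have hj : j' != j by apply: contra hm' => /eqP ->.
    have -> : (w *m Q)^T (f j') 0 = 0.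
      rewrite mxE -[RHS](_ : (delta_mx 0 j : 'rV[F]_r) 0 j' = 0); last by rewrite mxE; move: hj; case: eqP => // ->; rewrite eqxx.
      by rewrite -hw !mxE; apply: eq_bigr => i _; rewrite !mxE.
    by rewrite mulr0.
  have := hM m'; rewrite hvM hm'S !mxE => /esym ->.
  by rewrite mul0r.
case/negP: hv; apply/eqP; apply: hfree.
by rewrite mul_mx_row hvQ -/y hy row_mx0.
Qed.

Lemma cover n (k : 'I_(n + n)) :
  (exists m : 'I_n, k = rshift n m) \/ (exists m : 'I_n, k = barpos (rshift n m)).
Proof.
case: (split_ordP k) => i ->; last by left; exists i.
right; exists (rev_ord i); apply: val_inj => /=; have := ltn_ord i; lia.
Qed.

Lemma rshift_bar_neq n (m m' : 'I_n) : rshift n m <> barpos (rshift n m').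
Proof. move=> /(congr1 val) /=; have := ltn_ord m'; lia. Qed.

Lemma selfdual_exists (F : fieldType) n (A : 'M[F]_(n, n + n)) :
  \rank A = n -> (forall (i j : 'I_n), Omega (row i A) (row j A) = 0) ->
  exists beta : {set 'I_(n + n)},
    [/\ #|beta| = n, ltrans beta = beta & pluecker A beta != 0].
Proof.
move=> hA hO.
set Q : 'M[F]_n := \matrix_(i, m) A i (rshift n m).
set P : 'M[F]_n := \matrix_(i, m) A i (barpos (rshift n m)).
have hfreeA : row_free A by rewrite /row_free hA.
have hfree : forall z : 'rV[F]_n, z *m row_mx P Q = 0 -> z = 0.
  move=> z; rewrite mul_mx_row -row_mx0 => /eq_row_mx [hP hQ].
  apply: (row_free_inj hfreeA); rewrite mul0mx; apply/rowP => k; rewrite [RHS]mxE.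
  case: (cover k) => [[m ->]|[m ->]].
    have := congr1 (fun M : 'M[F]_(1, n) => M 0 m) hQ; rewrite !mxE => h; rewrite -[RHS]h.
    by apply: eq_bigr => i _; rewrite mxE.
  have := congr1 (fun M : 'M[F]_(1, n) => M 0 m) hP; rewrite !mxE => h; rewrite -[RHS]h.
  by apply: eq_bigr => i _; rewrite mxE.
have hsym : P *m Q^T = Q *m P^T.
  apply/matrixP => i j; have := hO i j.
  rewrite /Omega big_split_ord /= big_pred0 => [|k]; last by rewrite leqNgt ltn_ord.
  rewrite add0r (eq_bigl xpredT) => [|k]; last by rewrite leq_addr.
  rewrite sumrB => /eqP; rewrite subr_eq0 => /eqP e.
  rewrite !mxE; move: e; congr (_ = _); apply: eq_bigr => k _; by rewrite !mxE.
have [S hS] := exists_S hfree hsym.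
pose fS (m : 'I_n) := if m \in S then rshift n m else barpos (rshift n m).
have fS_inj : injective fS.
  move=> m1 m2; rewrite /fS.
  case: (m1 \in S); case: (m2 \in S) => e.
  - exact: rshift_inj e.
  - by case: (rshift_bar_neq e).
  - by case: (rshift_bar_neq (esym e)).
  - exact: rshift_inj (@bar_inj n _ _ e).
set beta := fS @: [set: 'I_n].
have hmem1 m : (rshift n m \in beta) = (m \in S).
  apply/imsetP/idP => [[m' _ e]|h]; last by exists m; rewrite /fS ?h.
  move: e; rewrite /fS; case hm' : (m' \in S) => e.
    by rewrite (rshift_inj e).
  by case: (rshift_bar_neq e).
have hmem2 m : (barpos (rshift n m) \in beta) = (m \notin S).
  apply/imsetP/idP => [[m' _ e]|h]; last by exists m; rewrite /fS ?(negPf h).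
  move: e; rewrite /fS; case hm' : (m' \in S) => e.
    by case: (rshift_bar_neq (esym e)).
  by rewrite (rshift_inj (@bar_inj n _ _ e)) hm'.
exists beta; split.
- by rewrite card_imset // cardsT card_ord.
- apply/setP => x; rewrite /ltrans inE -{1}[x](@bar_inv n) (mem_imset _ _ (@bar_inj n)).
  case: (cover x) => [[m ->]|[m ->]]; rewrite ?bar_inv hmem1 hmem2 ?negbK //.
set u := map fS (enum 'I_n).
have hu : size u = n by rewrite size_map size_enum_ord.
have huu : uniq u by rewrite (map_inj_uniq fS_inj) enum_uniq.
have hsort : sort (@leo _) u = enum beta.
  apply: sort_eqP; first exact/sorted_lto_leo/sorted_enum_set.
  apply: uniq_perm => //; first exact: enum_uniq.
  move=> x; rewrite mem_enum; apply/mapP/imsetP => [[m _ ->]|[m _ ->]].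
    by exists m.
  by exists m; rewrite ?mem_enum.
have hdet := det_colsel_sort (@dflt n) A hu huu.
rewrite hsort in hdet.
have hM : colsel (@dflt n) A u = \matrix_(i, m) (if m \in S then Q i m else P i m).
  apply/matrixP => i j; rewrite !mxE (nth_map j) ?size_enum_ord // nth_ord_enum /fS.
  by case: (j \in S).
rewrite hM in hdet.
apply: contra hS => /eqP h0; rewrite hdet.
by rewrite /pluecker in h0; rewrite [X in _ * X]h0 mulr0.
Qed.

Lemma lsign_selfdual n (beta : {set 'I_(n + n)}) :
  ltrans beta = beta -> lsign beta = 1.
Proof.
move=> hb.
have hsd : forall x, (barpos x \in beta) = (x \notin beta).
  move=> x; rewrite -{1}hb /ltrans inE (mem_imset _ _ (@bar_inj n)).
  by [].
rewrite /lsign !sgnseqE -exprD i1E i2E.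
have -> : cr (fun x => (x \in ~: beta) && (x < n)%N) (fun y => (y \in beta) && (y < n)%N)
   = cr (fun x => (x \in ~: beta) && (n <= x)%N) (fun y => (y \in beta) && (n <= y)%N).
  rewrite /cr (reindex_inj (@bar_inj n)) /=.
  rewrite (eq_bigr (fun x : 'I_(n + n) => \sum_(y : 'I_(n + n))
      (((barpos x \in ~: beta) && (barpos x < n)%N && ((barpos y \in beta) && (barpos y < n)%N)
        && (barpos y < barpos x)%N) : nat))%N); last first.
    by move=> x _; rewrite (reindex_inj (@bar_inj n)).
  rewrite exchange_big; apply: eq_bigr => x _; apply: eq_bigr => y _.
  rewrite !inE !hsd !barL bar_lt negbK.
  by case: (x \in beta); case: (y \in beta); case: (n <= x)%N; case: (n <= y)%N.
by rewrite -signr_odd oddD addbb.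
Qed.



Lemma part2 (F : fieldType) n (A : 'M[F]_(n, n + n)) :
  \rank A = n -> (forall (i j : 'I_n), Omega (row i A) (row j A) = 0) ->
  forall alpha : {set 'I_(n + n)}, #|alpha| = n ->
    pluecker A alpha - (lsign alpha)%:~R * pluecker A (ltrans alpha) = 0.
Proof.
move=> hA hO alpha ha.
have [c hc hp] := part1 hA hA hO.
have [beta [hb1 hb2 hb3]] := selfdual_exists hA hO.
have hc1 : c = 1.
  have := hp beta hb1; rewrite hb2 lsign_selfdual // mulr1 => e.
  by apply: (mulIf hb3); rewrite -e mul1r.
by rewrite (hp alpha ha) hc1 mul1r subrr.
Qed.

Theorem proposition2p7 (R : realType) (n : nat) :
  (forall (A B : 'M[R[i]]_(n, n + n)),
      \rank A = n -> \rank B = n ->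
      (forall (i j : 'I_n), Omega (row i B) (row j A) = 0) ->
      exists2 c : R[i], c != 0 &
        forall alpha : {set 'I_(n + n)}, #|alpha| = n ->
          pluecker B alpha = c * (lsign alpha)%:~R * pluecker A (ltrans alpha))
  /\
  (forall A : 'M[R[i]]_(n, n + n),
      \rank A = n ->
      (forall (i j : 'I_n), Omega (row i A) (row j A) = 0) ->
      forall alpha : {set 'I_(n + n)}, #|alpha| = n ->
        pluecker A alpha - (lsign alpha)%:~R * pluecker A (ltrans alpha) = 0).
Proof.
split.
  move=> A B hA hB hO; exact: part1.
move=> A hA hO; exact: part2.
Qed.
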